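(* Let $f$ be a non-trivial ABC voting rule that satisfies anonymity, neutrality, consistency, continuity, and independence of losers. Then there is a ballot size $r\in\{1,\dots,m-1\}$ such that $f(A^{x,r})=\{W\in\mathcal W_k:x\in W\}$ and $f(A^{-x,r})=\{W\in\mathcal W_k:x\notin W\}$ for all candidates $x\in\mathcal C$.
   Context: Let $\mathcal C=\{c_1,\dots,c_m\}$ be a set of $m\ge 2$ candidates and $\mathbb N=\{1,2,\dots\}$ the set of potential voters. An approval ballot is a non-empty subset of $\mathcal C$; $\mathcal A$ is the set of all ballots. A profile is a map $A:N_A\to\mathcal A$ for a non-empty finite electorate $N_A\subseteq\mathbb N$; $\mathcal A^*$ is the set of profiles. For disjoint electorates $A+A'$ is the union profile, and $\lambda A$ consists of $\lambda$ copies of $A$ on disjoint voter sets. Fix $k\in\{1,\dots,m-1\}$; $\mathcal W_k$ is the set of $k$-element subsets of $\mathcal C$. An ABC voting rule is a map $f:\mathcal A^*\to2^{\mathcal W_k}\setminus\{\emptyset\}$; it is trivial if $f(A)=\mathcal W_k$ for every profile $A$, and non-trivial otherwise. Anonymity: invariance under renaming voters. Neutrality: $f(\tau(A))=\{\tau(W):W\in f(A)\}$ for every permutation $\tau$ of $\mathcal C$ ($\tau(A)_i=\tau(A_i)$). Consistency: $f(A+A')=f(A)\cap f(A')$ for disjoint $A,A'$ with non-empty intersection of outcomes. Continuity: for all $A,A'$ there is $\lambda\in\mathbb N$ with $f(\lambda A+A')\subseteq f(A)$. Independence of losers: $W\in f(A)$ implies $W\in f(A')$ whenever $N_A=N_{A'}$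 and, for all voters $i$, $A'_i\subseteq A_i$ and $W\cap A'_i=W\cap A_i$. For $x\in\mathcal C$ and $r\in\{1,\dots,m\}$, $A^{x,r}$ is the profile in which every ballot $S\in\mathcal A$ with $|S|=r$ and $x\in S$ is reported by exactly one voter (and no other ballots appear), and $A^{-x,r}$ is the profile in which every ballot $S$ with $|S|=r$ and $x\notin S$ is reported by exactly one voter. *)

(* Defs.v *)
(* Candidates C = 'I_m, voters = positive naturals,
   profiles = finite maps from voters to approval ballots. *)
From mathcomp Require Import all_boot all_order.
From mathcomp Require Import fingroup perm.
From mathcomp Require Import finmap.
Set Implicit Arguments. Unset Strict Implicit. Unset Printing Implicit Defensive.
Local Open Scope fset_scope.
Local Open Scope fmap_scope.

Definition profile (m : nat) := {fmap nat -> {set 'I_m}}.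

Definition valid_profile m (A : profile m) : Prop :=
  (exists i, i \in domf A) /\ (0 \notin domf A) /\
  (forall i S, A.[? i] = Some S -> S != set0).

Definition committees m (k : nat) : {set {set 'I_m}} := [set W : {set 'I_m} | #|W| == k].

(* f is an ABC voting rule (its values on non-profiles are irrelevant) *)
Definition is_ABC_rule m k (f : profile m -> {set {set 'I_m}}) : Prop :=
  forall A, valid_profile A -> f A \subset committees m k /\ f A != set0.

Definition nontrivial m k (f : profile m -> {set {set 'I_m}}) : Prop :=
  exists A, valid_profile A /\ f A <> committees m k.

Definition is_renaming m (A B : profile m) (sigma : nat -> nat) : Prop :=
  {in domf A &, injective sigma} /\
  (forall v, (v \in domf B) <-> exists2 i, i \in domf A & v = sigma i) /\
  (forall i, i \in domf A -> B.[? sigma i] = A.[? i]).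

Definition anonymous m (f : profile m -> {set {set 'I_m}}) : Prop :=
  forall A B sigma, valid_profile A -> valid_profile B ->
    is_renaming A B sigma -> f B = f A.

Definition is_cand_perm m (tau : {perm 'I_m}) (A B : profile m) : Prop :=
  (forall v, (v \in domf B) = (v \in domf A)) /\
  (forall i S, A.[? i] = Some S -> B.[? i] = Some (tau @: S)).

Definition neutral m (f : profile m -> {set {set 'I_m}}) : Prop :=
  forall (tau : {perm 'I_m}) A B, valid_profile A -> valid_profile B ->
    is_cand_perm tau A B -> f B = [set tau @: W | W : {set 'I_m} in f A].

Definition is_union m (A A' B : profile m) : Prop :=
  (forall v, v \in domf A -> v \notin domf A') /\
  (forall v, (v \in domf B) = (v \in domf A) || (v \in domf A')) /\
  (forall i, i \in domf A -> B.[? i] = A.[? i]) /\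
  (forall i, i \in domf A' -> B.[? i] = A'.[? i]).

Definition consistent m (f : profile m -> {set {set 'I_m}}) : Prop :=
  forall A A' B, valid_profile A -> valid_profile A' -> valid_profile B ->
    is_union A A' B -> f A :&: f A' != set0 -> f B = f A :&: f A'.

(* B = lambda A + A': voter i of the j-th copy of A (j < lambda) is sigma j i;
   the copies and A' live on pairwise disjoint voter sets *)
Definition is_multi_union m (lambda : nat) (A A' B : profile m)
    (sigma : nat -> nat -> nat) : Prop :=
  (forall j i j' i', j < lambda -> j' < lambda -> i \in domf A -> i' \in domf A ->
     sigma j i = sigma j' i' -> j = j' /\ i = i') /\
  (forall j i, j < lambda -> i \in domf A -> sigma j i \notin domf A') /\
  (forall v, (v \in domf B) <->
     (v \in domf A' \/ exists j i, [/\ j < lambda, i \in domf A & v = sigma j i])) /\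
  (forall j i, j < lambda -> i \in domf A -> B.[? sigma j i] = A.[? i]) /\
  (forall i, i \in domf A' -> B.[? i] = A'.[? i]).

Definition continuous m (f : profile m -> {set {set 'I_m}}) : Prop :=
  forall A A', valid_profile A -> valid_profile A' ->
    exists2 lambda, 0 < lambda &
      forall B sigma, valid_profile B -> is_multi_union lambda A A' B sigma ->
        f B \subset f A.

Definition indep_losers m (f : profile m -> {set {set 'I_m}}) : Prop :=
  forall A A' W, valid_profile A -> valid_profile A' ->
    (forall v, (v \in domf A') = (v \in domf A)) ->
    (forall i S S', A.[? i] = Some S -> A'.[? i] = Some S' ->
       S' \subset S /\ W :&: S' = W :&: S) ->
    W \in f A -> W \in f A'.

(* A is (a copy of) A^{x,r}: each ballot S with |S| = r and x in S is
   reported by exactly one voter, and no other ballot appears *)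
Definition is_Axr m (x : 'I_m) (r : nat) (A : profile m) : Prop :=
  (forall i j S, A.[? i] = Some S -> A.[? j] = Some S -> i = j) /\
  (forall S, (exists i, A.[? i] = Some S) <-> (#|S| = r /\ x \in S)).

Definition is_Anxr m (x : 'I_m) (r : nat) (A : profile m) : Prop :=
  (forall i j S, A.[? i] = Some S -> A.[? j] = Some S -> i = j) /\
  (forall S, (exists i, A.[? i] = Some S) <-> (#|S| = r /\ x \notin S)).

(* Main.v *)
Require Import Defs.
From mathcomp Require Import all_boot all_order.
From mathcomp Require Import fingroup perm.
From mathcomp Require Import finmap.
From mathcomp Require Import zify.

Module Aux.
Set Implicit Arguments. Unset Strict Implicit. Unset Printing Implicit Defensive.


Section Prof.
Variable m : nat.
Local Open Scope fset_scope.
Local Open Scope fmap_scope.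

Fixpoint prof (n : nat) (L : seq {set 'I_m}) : profile m :=
  if L is X :: L' then (prof n.+1 L').[n <- X] else [fmap].

Lemma fnd_prof n L (i : nat) : (prof n L).[? i] =
  if (n <= i) && (i < n + size L) then Some (nth set0 L (i - n)) else None.
Proof.
elim: L n => [|X L IH] n /=.
  by rewrite fnd_fmap0; case: ifP => // /andP[]; lia.
rewrite fnd_set IH; case: (eqVneq i n) => [->|ne].
  by rewrite leqnn subnn /=; case: ifP => //; lia.
have [lt|ge] := ltnP n i.
  have -> : i - n = (i - n.+1).+1 by lia.
  rewrite /=; case: ifP => h1; case: ifP => h2 //; lia.
rewrite ifF ?ifF //; lia.
Qed.

Lemma mem_prof n L (i : nat) : (i \in domf (prof n L)) = (n <= i) && (i < n + size L).
Proof. by rewrite -fndSome fnd_prof; case: ifP. Qed.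

Lemma prof_ballot n L (i : nat) S : (prof n L).[? i] = Some S -> S \in L.
Proof.
rewrite fnd_prof; case: ifP => // /andP[a b] [<-]; apply: mem_nth; by rewrite ltn_subLR.
Qed.

Lemma prof_has n L S : S \in L -> exists i, (prof n L).[? i] = Some S.
Proof.
move=> SL; exists (n + index S L)%N; rewrite fnd_prof.
have := SL; rewrite -index_mem => h.
rewrite ifT; last by rewrite leq_addr /= ltn_add2l.
by rewrite addKn nth_index.
Qed.

Lemma prof_uniqb n L (i j : nat) S : uniq L ->
  (prof n L).[? i] = Some S -> (prof n L).[? j] = Some S -> i = j.
Proof.
move=> uL; rewrite !fnd_prof; case: ifP => // /andP[a b]; case: ifP => // /andP[c d].
move=> [e1] [e2]; apply/eqP.
have : nth set0 L (i - n) == nth set0 L (j - n) by rewrite e1 e2.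
rewrite nth_uniq ?ltn_subLR // => /eqP; lia.
Qed.

Definition allne (L : seq {set 'I_m}) := all (fun S => S != set0) L.

Lemma prof_valid n L : 0 < n -> L != [::] -> allne L -> valid_profile (prof n L).
Proof.
move=> n0 L0 aL; split; last split.
- exists n; rewrite mem_prof; case: L L0 {aL} => //= X L _; lia.
- rewrite mem_prof; lia.
- by move=> i S /prof_ballot SL; move/allP: aL; apply.
Qed.

Lemma prof_union n L1 L2 :
  is_union (prof n L1) (prof (n + size L1) L2) (prof n (L1 ++ L2)).
Proof.
split; last split; last split.
- move=> v; rewrite !mem_prof; lia.
- move=> v; rewrite !mem_prof size_cat; lia.
- move=> i; rewrite mem_prof => h; rewrite !fnd_prof size_cat.
  rewrite !ifT; try lia. by rewrite nth_cat ifT //; lia.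
- move=> i; rewrite mem_prof => h; rewrite !fnd_prof size_cat.
  rewrite !ifT; try lia. rewrite nth_cat ifF; last lia.
  congr (Some (nth _ _ _)); lia.
Qed.

Lemma prof_map_fnd n L (g : {set 'I_m} -> {set 'I_m}) (i : nat) S :
  (prof n L).[? i] = Some S -> (prof n (map g L)).[? i] = Some (g S).
Proof.
rewrite !fnd_prof size_map; case: ifP => // /andP[a b] [<-].
by rewrite (nth_map set0) //; lia.
Qed.

Lemma prof_map_dom n L (g : {set 'I_m} -> {set 'I_m}) (v : nat) :
  (v \in domf (prof n (map g L))) = (v \in domf (prof n L)).
Proof. by rewrite !mem_prof size_map. Qed.

End Prof.


Section Perms.
Variable m : nat.
Implicit Types (A B W : {set 'I_m}) (t : {perm 'I_m}).

Lemma mem_pim t A z : (z \in t @: A) = ((t^-1)%g z \in A).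
Proof. by rewrite -{1}(permKV t z) mem_imset //; exact: perm_inj. Qed.

Lemma pimK t A : (t^-1)%g @: (t @: A) = A.
Proof. by apply/setP => z; rewrite !mem_pim invgK permK. Qed.

Lemma pimKV t A : t @: ((t^-1)%g @: A) = A.
Proof. by apply/setP => z; rewrite !mem_pim invgK permKV. Qed.

Lemma card_pim t A : #|t @: A| = #|A|.
Proof. by rewrite card_imset //; exact: perm_inj. Qed.

Definition IMG t (X : {set {set 'I_m}}) := [set t @: W | W : {set 'I_m} in X].

Lemma mem_IMG t X W : (W \in IMG t X) = ((t^-1)%g @: W \in X).
Proof.
apply/imsetP/idP => [[W0 W0X ->]|h]; first by rewrite pimK.
by exists ((t^-1)%g @: W); rewrite // pimKV.
Qed.

Lemma exists_sub A n : n <= #|A| -> exists B, B \subset A /\ #|B| = n.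
Proof.
elim: n => [|n IH] h; first by exists set0; rewrite sub0set cards0.
have [B [BA cB]] := IH (ltnW h).
have [y] : exists y, y \in A :\: B.
  apply/set0Pn; rewrite -cards_eq0.
  have := subset_leq_card (subsetIr A B); move: (cardsID B A); lia.
rewrite inE => /andP[yB yA].
exists (y |: B); rewrite subUset sub1set yA BA cardsU1 yB cB; split => //.
Qed.

Lemma porbitL A B : #|A| = #|B| -> exists t : {perm 'I_m},
  t @: A = B /\ forall z, (z \in A) = (z \in B) -> t z = z.
Proof.
move: {2}#|A :\: B| (erefl #|A :\: B|) => n.
elim: n A => [|n IH] A cAB cA.
  have AB : A \subset B by rewrite -setD_eq0 -cards_eq0 cAB.
  have -> : A = B by apply/eqP; rewrite eqEcard AB cA /=.
  by exists 1%g; split => [|z _]; [apply/setP => z; rewrite mem_pim invg1 perm1 | rewrite perm1].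
have [a aAB] : exists a, a \in A :\: B by apply/set0Pn; rewrite -cards_eq0 cAB.
have cBA : #|B :\: A| = n.+1.
  by move: (cardsID B A) (cardsID A B); rewrite setIC cA cAB; lia.
have [b bBA] : exists b, b \in B :\: A by apply/set0Pn; rewrite -cards_eq0 cBA.
move: aAB bBA; rewrite !inE => /andP[aB aA] /andP[bA bB].
have ab : a != b by apply: contraNneq aB => ->.
set t1 := tperm a b.
set A1 := t1 @: A.
have memA1 z : (z \in A1) = if z == a then false else if z == b then true else z \in A.
  rewrite /A1 mem_pim tpermV; case: (eqVneq z a) => [->|za].
    by rewrite tpermL (negPf bA).
  case: (eqVneq z b) => [->|zb]; first by rewrite tpermR.
  by rewrite tpermD // eq_sym.
have cA1 : #|A1 :\: B| = n.
  have -> : A1 :\: B = (A :\: B) :\ a.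
    apply/setP => z; rewrite !inE memA1.
    case: (eqVneq z a) => //= za; case: (eqVneq z b) => [->|zb] /=; rewrite ?bB ?andbT ?andbF //.
  by move: (cardsD1 a (A :\: B)); rewrite cAB !inE aA aB; lia.
have [t2 [t2A t2f]] := IH A1 cA1 (etrans (card_pim _ _) cA).
exists (t1 * t2)%g; split.
  rewrite -t2A /A1 -imset_comp; apply: eq_imset => z; by rewrite permM.
move=> z hz; rewrite permM.
have za : z != a by apply/eqP => e; move: hz; rewrite e aA (negPf aB).
have zb : z != b by apply/eqP => e; move: hz; rewrite e bB (negPf bA).
rewrite /t1 tpermD 1?eq_sym //; apply: t2f; by rewrite memA1 (negPf za) (negPf zb).
Qed.

End Perms.


Section Main.
Variables (m k : nat) (f : profile m -> {set {set 'I_m}}).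
Hypotheses (Hm : 2 <= m) (Hk : 1 <= k <= m - 1) (Habc : is_ABC_rule k f)
  (Hanon : anonymous f) (Hneu : neutral f) (Hcons : consistent f)
  (Hil : indep_losers f).

Local Notation comm := (committees m k).
Local Notation prof := (@prof m).
Definition F S := f (prof 1 [:: S]).

Lemma f_sub A : valid_profile A -> f A \subset comm.
Proof. by case/Habc. Qed.
Lemma f_ne A : valid_profile A -> f A != set0.
Proof. by case/Habc. Qed.

Lemma canon A L : valid_profile A -> uniq L ->
  (forall i j S, A.[? i]%fmap = Some S -> A.[? j]%fmap = Some S -> i = j) ->
  (forall S, (exists i, A.[? i]%fmap = Some S) <-> S \in L) ->
  f A = f (prof 1 L).
Proof.
move=> vA uL uA memL.
have aL : allne L.
  apply/allP => S /memL [i hi]; case: vA => _ [_ h]; exact: h hi.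
have L0 : L != [::].
  case: vA => [[i iA] _]; move: iA; rewrite -fndSome.
  case E: (A.[? i])%fmap => [S|] // _.
  have : S \in L by apply/memL; exists i.
  by case: (L) {uL memL aL}.
apply/esym; apply: (Hanon (sigma := fun i => (index (odflt set0 A.[? i]%fmap) L).+1)) => //.
  exact: prof_valid.
split; last split.
- move=> i j; rewrite -!fndSome.
  case Ei: (A.[? i])%fmap => [Si|] //; case Ej: (A.[? j])%fmap => [Sj|] // _ _ /= [e].
  have SiL : Si \in L by apply/memL; exists i.
  have SjL : Sj \in L by apply/memL; exists j.
  have eS : Si = Sj by rewrite -(nth_index set0 SiL) e nth_index.
  by apply: (uA _ _ Si) => //; rewrite Ej eS.
- move=> v; rewrite mem_prof; split.
  + move=> /andP[h1 h2].
    have SL : nth set0 L (v - 1) \in L by apply: mem_nth; rewrite ltn_subLR.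
    have [i Ei] := proj2 (memL _) SL.
    exists i; first by rewrite -fndSome Ei.
    by rewrite Ei /= index_uniq // ?ltn_subLR //; lia.
  + move=> [i]; rewrite -fndSome; case Ei: (A.[? i])%fmap => [S|] // _ ->.
    have SL : S \in L by apply/memL; exists i.
    by rewrite /= add1n ltnS index_mem.
- move=> i; rewrite -fndSome; case Ei: (A.[? i])%fmap => [S|] // _.
  have SL : S \in L by apply/memL; exists i.
  rewrite fnd_prof /= add1n ltnS index_mem SL subn1 /=.
  by rewrite nth_index.
Qed.

Lemma canon_lists n L1 L2 : 0 < n -> uniq L1 -> uniq L2 -> L1 =i L2 ->
  L1 != [::] -> allne L1 -> f (prof n L1) = f (prof 1 L2).
Proof.
move=> n0 u1 u2 e L0 a1; apply: canon => //.
- exact: prof_valid.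
- by move=> i j S; apply: prof_uniqb.
- move=> S; rewrite -e; split; first by case=> i; apply: prof_ballot.
  exact: prof_has.
Qed.

Lemma F_shift n S : 0 < n -> S != set0 -> f (prof n [:: S]) = F S.
Proof. by move=> n0 S0; apply: canon_lists => //=; rewrite S0. Qed.

Lemma allne_map (t : {perm 'I_m}) (L : seq {set 'I_m}) : allne L -> allne (map (fun S : {set 'I_m} => t @: S) L).
Proof. by move=> /allP h; apply/allP => _ /mapP[S SL ->]; rewrite imset_eq0 h. Qed.

Lemma neutral_prof (t : {perm 'I_m}) (L : seq {set 'I_m}) : L != [::] -> allne L ->
  f (prof 1 (map (fun S : {set 'I_m} => t @: S) L)) = IMG t (f (prof 1 L)).
Proof.
move=> L0 aL; apply: Hneu.
- exact: prof_valid.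
- by apply: prof_valid; rewrite ?allne_map //; case: (L) L0.
- split=> [v|i S]; first exact: prof_map_dom.
  exact: prof_map_fnd.
Qed.

Lemma sym_all (X : {set {set 'I_m}}) : X \subset comm -> X != set0 ->
  (forall t, IMG t X = X) -> X = comm.
Proof.
move=> Xs X0 h; apply/eqP; rewrite eqEsubset Xs /=.
apply/subsetP => W' W'c; have [W WX] := set0Pn _ X0.
have := subsetP Xs _ WX; rewrite !inE in W'c * => /eqP cW.
have [t [tW _]] := porbitL (etrans cW (esym (eqP W'c))).
by rewrite -(h t) mem_IMG -tW pimK.
Qed.

Lemma sym_x (X : {set {set 'I_m}}) (x : 'I_m) (W W' : {set 'I_m}) : W \in X -> W' \in comm -> #|W| = k ->
  (x \in W) = (x \in W') ->
  (forall t : {perm 'I_m}, t x = x -> IMG t X = X) -> W' \in X.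
Proof.
move=> WX; rewrite inE => /eqP cW' cW hx h.
have [t [tW tf]] := porbitL (etrans cW (esym cW')).
by rewrite -(h t (tf _ hx)) mem_IMG -tW pimK.
Qed.

Lemma pim_setT (t : {perm 'I_m}) : t @: [set: 'I_m] = [set: 'I_m].
Proof. by apply/setP => z; rewrite mem_pim !inE. Qed.

Lemma setT_ne : [set: 'I_m] != set0.
Proof. by apply/set0Pn; exists (Ordinal (ltnW Hm)). Qed.

Lemma valid1 n S : 0 < n -> S != set0 -> valid_profile (prof n [:: S]).
Proof. by move=> n0 S0; apply: prof_valid => //=; rewrite S0. Qed.

Lemma F_setT : F [set: 'I_m] = comm.
Proof.
have v := valid1 (ltn0Sn 0) setT_ne.
apply: sym_all; [exact: f_sub|exact: f_ne|] => t.
by rewrite /F -(neutral_prof t) //= ?setT_ne // pim_setT.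
Qed.


Lemma Inter (P : profile m) (X : {set {set 'I_m}}) : valid_profile P -> X != set0 ->
  (forall W, W \in X <-> (forall i S, P.[? i]%fmap = Some S -> W \in F S)) -> f P = X.
Proof.
move: {2}#|` domf P| (erefl #|` domf P|) => n.
elim: n P X => [|n IH] P X cP vP X0 hX.
  case: vP => [[i iP] _]; move: cP; rewrite (cardfsD1 i) iP; lia.
case: (vP) => [[i iP] [P0 Pne]].
have [S ES] : exists S, P.[? i]%fmap = Some S.
  by move: iP; rewrite -fndSome; case: (P.[? i])%fmap => // S; exists S.
have i0 : 0 < i.
  by rewrite lt0n; apply/eqP => e; rewrite e in iP; rewrite iP in P0.
have S0 : S != set0 := Pne i S ES.
set P' := P.[~ i]%fmap.
have cP' : #|` domf P'| = n.
  by move: cP; rewrite (cardfsD1 i) iP /P' domf_rem; lia.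
have hU : is_union (prof i [:: S]) P' P.
  split; last split; last split.
  - move=> v; rewrite mem_prof /P' mem_remf1 => h.
    by rewrite (_ : v == i) //; apply/eqP; move: h; rewrite addn1; lia.
  - move=> v; rewrite mem_prof /P' mem_remf1.
    case: (eqVneq v i) => [->|vi] /=; first by rewrite iP leqnn addn1 ltnSn.
    rewrite addn1 (_ : (i <= v < i.+1) = false) //; move: vi => /eqP; lia.
  - move=> v; rewrite mem_prof addn1 => h.
    have -> : v = i by apply/eqP; lia.
    by rewrite ES fnd_prof leqnn addn1 ltnSn subnn.
  - by move=> v; rewrite /P' mem_remf1 fnd_rem1 => /andP[-> _].
have FS : f (prof i [:: S]) = F S by apply: F_shift.
case: n IH cP cP' => [|n] IH cP cP'.
  have e : P = prof i [:: S].
    apply/fmapP => v; rewrite fnd_prof addn1.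
    case: (eqVneq v i) => [->|vi]; first by rewrite leqnn ltnSn subnn.
    rewrite ifF; last by move: vi => /eqP; lia.
    apply: not_fnd; apply: contraTN (erefl true) => vP'.
    have : v \in domf P' by rewrite /P' mem_remf1 vi.
    by rewrite (cardfs0_eq cP') inE.
  rewrite e FS; apply/setP => W; apply/idP/idP => h.
    by apply/hX => j T; rewrite e => /(prof_ballot) ; rewrite inE => /eqP ->.
  by move/hX: h => /(_ i S ES).
have vP' : valid_profile P'.
  split; last split.
  - by apply/fset0Pn; rewrite -cardfs_gt0 cP'.
  - by rewrite /P' mem_remf1 negb_and P0 orbT.
  - by move=> j T; rewrite /P' fnd_rem1; case: ifP => // _; apply: Pne.
pose X' := [set W | [forall j : domf P', W \in F (P' j)]].
have hX' : forall W, W \in X' <-> (forall j T, P'.[? j]%fmap = Some T -> W \in F T).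
  move=> W; rewrite inE; split.
    move=> /forallP h j T E.
    have jP' : j \in domf P' by rewrite -fndSome E.
    have := h [` jP']%fset; congr (_ \in F _).
    by apply: Some_inj; rewrite Some_fnd.
  by move=> h; apply/forallP => j; apply: (h (val j)); rewrite -Some_fnd.
have XX' : X \subset X'.
  apply/subsetP => W /hX h; apply/hX' => j T; rewrite /P' fnd_rem1.
  by case: ifP => // _; apply: h.
have XS : X \subset F S.
  by apply/subsetP => W /hX h; apply: (h i).
have fP' : f P' = X'.
  apply: IH => //; apply: contraNneq X0 => e.
  by apply/eqP; apply/setP => W; rewrite inE; apply/negbTE; apply: contraTN (erefl true) => WX;
     move/subsetP: XX' => /(_ W WX); rewrite e inE.
have [W0 W0X] := set0Pn _ X0.
rewrite (Hcons (valid1 i0 S0) vP' vP hU); last first.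
  by rewrite FS fP'; apply/set0Pn; exists W0; rewrite inE (subsetP XS _ W0X) (subsetP XX' _ W0X).
rewrite FS fP'; apply/setP => W; rewrite inE; apply/andP/idP.
  move=> [WS /hX' WX']; apply/hX => j T.
  case: (eqVneq j i) => [->|ji]; first by rewrite ES => -[<-].
  by move=> E; apply: (WX' j); rewrite /P' fnd_rem1 ji.
move=> WX; split; [exact: (subsetP XS) | exact: (subsetP XX')].
Qed.


Definition LA x r := enum [set S : {set 'I_m} | (#|S| == r) && (x \in S)].
Definition LN x r := enum [set S : {set 'I_m} | (#|S| == r) && (x \notin S)].
Definition LR r := enum [set S : {set 'I_m} | #|S| == r].

Lemma mem_LA x r S : (S \in LA x r) = (#|S| == r) && (x \in S).
Proof. by rewrite mem_enum inE. Qed.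
Lemma mem_LN x r S : (S \in LN x r) = (#|S| == r) && (x \notin S).
Proof. by rewrite mem_enum inE. Qed.
Lemma mem_LR r S : (S \in LR r) = (#|S| == r).
Proof. by rewrite mem_enum inE. Qed.

Lemma card_ne (S : {set 'I_m}) : 0 < #|S| -> S != set0.
Proof. by rewrite lt0n cards_eq0. Qed.

Lemma allne_card (L : seq {set 'I_m}) r : 0 < r -> (forall S, S \in L -> #|S| = r) -> allne L.
Proof. by move=> r0 h; rewrite /allne; apply/allP => S /h cS /=; rewrite -cards_eq0 cS -lt0n. Qed.

Lemma cardT : #|[set: 'I_m]| = m.
Proof. by rewrite cardsT card_ord. Qed.

Lemma exists_with x r : 1 <= r <= m -> exists S : {set 'I_m}, #|S| = r /\ x \in S.
Proof.
move=> /andP[r1 rm].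
have [B [BC cB]] : exists B : {set 'I_m}, B \subset [set~ x] /\ #|B| = r.-1.
  by apply: exists_sub; rewrite cardsC1 card_ord; lia.
have xB : x \notin B by apply/negP => /(subsetP BC); rewrite !inE eqxx.
exists (x |: B); rewrite cardsU1 xB cB setU11; split => //; lia.
Qed.

Lemma exists_without x r : r <= m - 1 -> exists S : {set 'I_m}, #|S| = r /\ x \notin S.
Proof.
move=> rm.
have [B [BC cB]] : exists B : {set 'I_m}, B \subset [set~ x] /\ #|B| = r.
  by apply: exists_sub; rewrite cardsC1 card_ord; lia.
by exists B; split => //; apply/negP => /(subsetP BC); rewrite !inE eqxx.
Qed.

Lemma LA_ne x r : 1 <= r <= m -> LA x r != [::].
Proof.
move=> h; have [S [cS xS]] := exists_with x h.
have : S \in LA x r by rewrite mem_LA cS eqxx xS.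
by case: (LA x r).
Qed.

Lemma LN_ne x r : r <= m - 1 -> LN x r != [::].
Proof.
move=> h; have [S [cS xS]] := exists_without x h.
have : S \in LN x r by rewrite mem_LN cS eqxx xS.
by case: (LN x r).
Qed.

Lemma LA_allne x r : 0 < r -> allne (LA x r).
Proof. by move=> r0; apply: (allne_card r0) => S; rewrite mem_LA => /andP[/eqP]. Qed.
Lemma LN_allne x r : 0 < r -> allne (LN x r).
Proof. by move=> r0; apply: (allne_card r0) => S; rewrite mem_LN => /andP[/eqP]. Qed.

Definition a x r := f (prof 1 (LA x r)).
Definition b x r := f (prof 1 (LN x r)).

Lemma mem_map_pim (t : {perm 'I_m}) (L : seq {set 'I_m}) S :
  (S \in map (fun S : {set 'I_m} => t @: S) L) = ((t^-1)%g @: S \in L).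
Proof.
apply/mapP/idP => [[T TL ->]|h]; first by rewrite pimK.
by exists ((t^-1)%g @: S); rewrite // pimKV.
Qed.

Lemma uniq_map_pim (t : {perm 'I_m}) (L : seq {set 'I_m}) :
  uniq L -> uniq (map (fun S : {set 'I_m} => t @: S) L).
Proof. by move=> u; rewrite map_inj_uniq //; apply: imset_inj; exact: perm_inj. Qed.

Lemma a_perm (t : {perm 'I_m}) x r : 1 <= r <= m -> a (t x) r = IMG t (a x r).
Proof.
move=> h; have r0 : 0 < r by case/andP: h.
rewrite /a -neutral_prof ?LA_ne ?LA_allne //.
apply/esym; apply: canon_lists => //.
- by apply: uniq_map_pim; exact: enum_uniq.
- exact: enum_uniq.
- by move=> S; rewrite mem_map_pim !mem_LA card_pim mem_pim invgK.
- by rewrite -size_eq0 size_map size_eq0 LA_ne.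
- exact: allne_map (LA_allne x r0).
Qed.

Lemma b_perm (t : {perm 'I_m}) x r : 1 <= r <= m - 1 -> b (t x) r = IMG t (b x r).
Proof.
move=> /andP[r0 h].
rewrite /b -neutral_prof ?LN_ne ?LN_allne //.
apply/esym; apply: canon_lists => //.
- by apply: uniq_map_pim; exact: enum_uniq.
- exact: enum_uniq.
- by move=> S; rewrite mem_map_pim !mem_LN card_pim mem_pim invgK.
- by rewrite -size_eq0 size_map size_eq0 LN_ne.
- exact: allne_map (LN_allne x r0).
Qed.

Definition In x := [set W in comm | x \in W].
Definition Out x := [set W in comm | x \notin W].

Lemma IMG_In (t : {perm 'I_m}) x : IMG t (In x) = In (t x).
Proof.
by apply/setP => W; rewrite mem_IMG !inE card_pim mem_pim invgK.
Qed.

Lemma IL_list (L : seq {set 'I_m}) (g : {set 'I_m} -> {set 'I_m}) W :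
  L != [::] -> allne L -> allne (map g L) ->
  (forall S, S \in L -> g S \subset S /\ W :&: g S = W :&: S) ->
  W \in f (prof 1 L) -> W \in f (prof 1 (map g L)).
Proof.
move=> L0 aL aG h; apply: Hil.
- exact: prof_valid.
- by apply: prof_valid; rewrite // -size_eq0 size_map size_eq0.
- by move=> v; rewrite prof_map_dom.
- move=> i S S' E; rewrite (prof_map_fnd g E) => -[<-]; apply: h.
  exact: prof_ballot E.
Qed.

Lemma Inter_list (L : seq {set 'I_m}) X : L != [::] -> allne L -> X != set0 ->
  (forall W, W \in X <-> (forall U, U \in L -> W \in F U)) -> f (prof 1 L) = X.
Proof.
move=> L0 aL X0 hX; apply: Inter => //; first exact: prof_valid.
move=> W; rewrite hX; split => h.
  by move=> i S E; apply: h; exact: prof_ballot E.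
by move=> U UL; have [i E] := prof_has 1 UL; exact: h i U E.
Qed.

Definition x0 : 'I_m := Ordinal (ltnW Hm).

Lemma f_LR r : 1 <= r <= m -> f (prof 1 (LR r)) = comm.
Proof.
move=> h; have r0 : 0 < r by case/andP: h.
have L0 : LR r != [::].
  have [S [cS _]] := exists_with x0 h.
  have : S \in LR r by rewrite mem_LR cS.
  by case: (LR r).
have aL : allne (LR r) by apply: (allne_card r0) => S; rewrite mem_LR => /eqP.
have v : valid_profile (prof 1 (LR r)) by apply: prof_valid.
apply: sym_all; [exact: f_sub|exact: f_ne|] => t.
rewrite -neutral_prof //; apply: canon_lists => //.
- by apply: uniq_map_pim; exact: enum_uniq.
- exact: enum_uniq.
- by move=> S; rewrite mem_map_pim !mem_LR card_pim.
- by rewrite -size_eq0 size_map size_eq0.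
- exact: allne_map.
Qed.

Lemma a_cap_b x r : 1 <= r <= m - 1 -> a x r :&: b x r != set0 ->
  a x r :&: b x r = comm.
Proof.
move=> h ne; have r0 : 0 < r by case/andP: h.
have hA : 1 <= r <= m by move: h; lia.
have hN : r <= m - 1 by case/andP: h.
have uQ : uniq (LA x r ++ LN x r).
  rewrite cat_uniq !enum_uniq /= andbT; apply/hasPn => S.
  by rewrite mem_LN mem_LA => /andP[_ xS]; rewrite (negPf xS) andbF.
have aQ : allne (LA x r ++ LN x r).
  by rewrite /allne all_cat; apply/andP; split; [exact: LA_allne|exact: LN_allne].
have Q0 : LA x r ++ LN x r != [::].
  by move: (LA_ne x hA); case: (LA x r).
have fQ : f (prof 1 (LA x r ++ LN x r)) = comm.
  rewrite -(f_LR hA); apply: canon_lists => //; first exact: enum_uniq.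
  by move=> S; rewrite mem_cat mem_LA mem_LN mem_LR; case: (x \in S); rewrite ?andbT ?andbF ?orbF.
have fN : f (prof (1 + size (LA x r)) (LN x r)) = b x r.
  by apply: canon_lists; rewrite ?enum_uniq ?LN_ne ?LN_allne.
rewrite -fQ -fN; apply/esym; apply: Hcons.
- by apply: prof_valid; rewrite ?LA_ne ?LA_allne.
- by apply: prof_valid; rewrite ?LN_ne ?LN_allne.
- exact: prof_valid.
- exact: prof_union.
- by rewrite fN.
Qed.

Lemma chain x r W : 2 <= r <= m -> W \in a x r -> x \notin W -> W \in b x r.-1.
Proof.
move=> h Wa xW.
have r0 : 0 < r by case/andP: h => /ltnW.
have hA : 1 <= r <= m by move: h; lia.
pose g := fun T : {set 'I_m} => T :\ x.
have ginj : {in LA x r &, injective g}.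
  move=> S T; rewrite !mem_LA => /andP[_ xS] /andP[_ xT] e.
  by rewrite -(setD1K xS) -(setD1K xT); congr (x |: _); exact: e.
have gmem : map g (LA x r) =i LN x r.-1.
  move=> S; apply/mapP/idP => [[T] |].
    rewrite mem_LA => /andP[/eqP cT xT] ->.
    by rewrite mem_LN /g setD11 andbT; move: (cardsD1 x T); rewrite xT cT; lia.
  rewrite mem_LN => /andP[/eqP cS xS]; exists (x |: S); last by rewrite /g setU1K.
  by rewrite mem_LA setU11 cardsU1 xS cS andbT; lia.
have aG : allne (map g (LA x r)).
  apply: (allne_card (r := r.-1)); first lia.
  by move=> S; rewrite gmem mem_LN => /andP[/eqP].
have := IL_list (g := g) (LA_ne x hA) (LA_allne x r0) aG _ Wa.
rewrite (canon_lists (L2 := LN x r.-1)) //.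
- by apply; move=> S _; split; [exact: subD1set|apply/setP => z; rewrite !inE; case: eqP => // ->; rewrite (negPf xW)].
- by rewrite map_inj_in_uniq // enum_uniq.
- exact: enum_uniq.
- by rewrite -size_eq0 size_map size_eq0 LA_ne.
Qed.

Lemma top x W : W \in comm -> x \notin W -> W \in b x (m - 1).
Proof.
move=> Wc xW.
have WT : W \in F [set: 'I_m] by rewrite F_setT.
have ne : [set~ x] != set0 by apply: card_ne; rewrite cardsC1 card_ord; lia.
have h := @IL_list [:: [set: 'I_m]] (fun _ => [set~ x]) W isT _ _ _ WT.
rewrite /= /allne /= setT_ne ne in h.
rewrite /b -(canon_lists (n := 1) (L1 := [:: [set~ x]])) //=.
- apply: h => // S; rewrite inE => /eqP ->; split; first exact: subsetT.
  by apply/setP => z; rewrite !inE; case: eqP => // ->; rewrite (negPf xW).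
- exact: enum_uniq.
- move=> S; rewrite mem_LN inE; apply/eqP/idP => [->|/andP[/eqP cS xS]].
    by rewrite cardsC1 card_ord !inE eqxx /=; apply/eqP; lia.
  apply/eqP; rewrite eqEcard cS cardsC1 card_ord; apply/andP; split; last by lia.
  by apply/subsetP => z zS; rewrite !inE; apply: contraNneq xS => <-.
- by rewrite ne.
Qed.

Lemma F_sub S : S != set0 -> F S \subset comm.
Proof. by move=> S0; apply: f_sub; apply: valid1. Qed.
Lemma F_ne S : S != set0 -> F S != set0.
Proof. by move=> S0; apply: f_ne; apply: valid1. Qed.

Lemma key r (S W : {set 'I_m}) (x : 'I_m) : 2 <= r <= m - 1 ->
  (forall S : {set 'I_m}, #|S| = r.-1 -> F S = comm) -> a x r = comm ->
  #|S| = r -> x \in S -> W \in comm ->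
  (exists2 W', W' \in comm & forall T, T \in LA x r -> (T == S) || (T \subset W) -> W' \in F T) ->
  W \in F S.
Proof.
move=> hr IH Ha cS xS Wc [W' W'c hW'].
have r0 : 0 < r by case/andP: hr => /ltnW.
have hA : 1 <= r <= m by move: hr; lia.
pose kept T := (T == S) || (T \subset W).
pose g T := if kept T then T else T :\ odflt x [pick y in T :\: W].
have gprop T : ~~ kept T -> exists y, [/\ y \in T, y \notin W & g T = T :\ y].
  move=> nk; rewrite /g (negPf nk); case: pickP => [y|none] /=.
    by rewrite inE => /andP[yW yT]; exists y.
  exfalso; move: nk; rewrite /kept negb_or => /andP[_ /negP]; apply.
  apply/subsetP => z zT; have := none z; rewrite inE zT andbT => /negbT.
  by rewrite negbK.
have SL : S \in LA x r by rewrite mem_LA cS eqxx xS.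
have Wa : W \in a x r by rewrite Ha.
have cT T : T \in LA x r -> #|T| = r by rewrite mem_LA => /andP[/eqP].
have cg T : T \in LA x r -> ~~ kept T -> F (g T) = comm.
  move=> TL nk; have [y [yT yW ->]] := gprop T nk; apply: IH.
  by move: (cardsD1 y T); rewrite yT (cT T TL); lia.
have aG : allne (map g (LA x r)).
  rewrite /allne; apply/allP => _ /mapP[T TL ->] /=.
  case: (boolP (kept T)) => kT.
    by rewrite /g kT; apply: card_ne; rewrite (cT T TL).
  have [y [yT yW ->]] := gprop T kT; apply: card_ne.
  by move: (cardsD1 y T); rewrite yT (cT T TL); lia.
have cond : forall T, T \in LA x r -> g T \subset T /\ W :&: g T = W :&: T.
  move=> T TL; case: (boolP (kept T)) => kT; first by rewrite /g kT.
  have [y [yT yW ->]] := gprop T kT; split; first exact: subD1set.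
  by apply/setP => z; rewrite !inE; case: eqP => // ->; rewrite (negPf yW).
have WG := IL_list (LA_ne x hA) (LA_allne x r0) aG cond Wa.
pose X := [set W0 in comm | all (fun T => kept T ==> (W0 \in F T)) (LA x r)].
rewrite (@Inter_list _ X) in WG.
- move: WG; rewrite inE => /andP[_ /allP /(_ S SL)].
  by rewrite /kept eqxx /=.
- by rewrite -size_eq0 size_map size_eq0 LA_ne.
- exact: aG.
- apply/set0Pn; exists W'; rewrite inE W'c /=; apply/allP => T TL.
  by apply/implyP; apply: hW'.
- move=> W0; rewrite inE; split.
    move=> /andP[W0c /allP hall] _ /mapP[T TL ->].
    case: (boolP (kept T)) => kT; first by rewrite /g kT; exact: (implyP (hall T TL) kT).
    by rewrite cg.
  move=> h; apply/andP; split.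
    have S0 : S != set0 by apply: card_ne; rewrite cS.
    have := h _ (map_f g SL); rewrite /g /kept eqxx /=.
    exact: (subsetP (F_sub S0)).
  apply/allP => T TL; apply/implyP => kT.
  by have := h _ (map_f g TL); rewrite /g kT.
Qed.

Lemma case1 r : 2 <= r <= m - 1 ->
  (forall S : {set 'I_m}, #|S| = r.-1 -> F S = comm) -> (forall x, a x r = comm) ->
  forall S W : {set 'I_m}, #|S| = r -> W \in comm -> ~~ (S \subset W) -> W \in F S.
Proof.
move=> hr IH Ha S W cS Wc /subsetPn [x xS xW].
have S0 : S != set0 by apply/set0Pn; exists x.
apply: (key hr IH (Ha x) cS xS Wc).
have [W' W'S] := set0Pn _ (F_ne S0).
exists W'; first exact: (subsetP (F_sub S0)).
move=> T; rewrite mem_LA => /andP[_ xT] /orP[/eqP -> //|TW].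
by move: xW; rewrite (subsetP TW x xT).
Qed.

Lemma step r : 2 <= r <= m - 1 ->
  (forall S : {set 'I_m}, #|S| = r.-1 -> F S = comm) -> (forall x, a x r = comm) ->
  forall S : {set 'I_m}, #|S| = r -> F S = comm.
Proof.
move=> hr IH Ha S cS.
have S0 : S != set0 by apply: card_ne; rewrite cS; case/andP: hr => /ltnW.
apply/eqP; rewrite eqEsubset F_sub //; apply/subsetP => W Wc.
case: (boolP (S \subset W)) => SW; last exact: (case1 hr IH Ha cS Wc SW).
have [x xS] := set0Pn _ S0.
apply: (key hr IH (Ha x) cS xS Wc).
have [W' [cW' xW']] := exists_without x (proj2 (andP Hk)).
have W'c : W' \in comm by rewrite inE cW'.
exists W' => // T; rewrite mem_LA => /andP[/eqP cT xT] _.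
apply: (case1 hr IH Ha cT W'c); apply/subsetPn; by exists x.
Qed.

Lemma allF : (forall x r, 1 <= r <= m - 1 -> a x r = comm) ->
  forall S : {set 'I_m}, S != set0 -> F S = comm.
Proof.
move=> Ha.
have claim : forall r, 1 <= r <= m - 1 -> forall S : {set 'I_m}, #|S| = r -> F S = comm.
  elim=> [|r IHr] h S cS; first by move: h; lia.
  case: r IHr h cS => [|r] IHr h cS.
    have /cards1P [y ->] : #|S| == 1 by rewrite cS.
    have ay : allne [:: [set y]] by rewrite /allne /= -cards_eq0 cards1.
    rewrite -(Ha y 1 h) /F; apply: canon_lists => //; first exact: enum_uniq.
    move=> T; rewrite inE mem_LA; apply/eqP/idP => [->|/andP[/cards1P [z ->]]].
      by rewrite cards1 set11.
    by rewrite inE => /eqP ->.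
  have hr2 : 2 <= r.+2 <= m - 1 by move: h; lia.
  apply: (step hr2 _ _ cS).
    by move=> S' cS'; apply: IHr => //; move: h; lia.
  by move=> x; apply: Ha; move: h; lia.
move=> S S0.
have : #|S| <= m by have := subset_leq_card (subsetT S); rewrite cardT.
rewrite leq_eqVlt => /orP[/eqP cS|lt].
  have -> : S = [set: 'I_m] by apply/eqP; rewrite eqEcard subsetT cardT cS /=.
  exact: F_setT.
apply: (claim #|S|) => //; apply/andP; split; first by rewrite lt0n cards_eq0.
by move: lt; lia.
Qed.

Lemma IMG_Out (t : {perm 'I_m}) x : IMG t (Out x) = Out (t x).
Proof. by apply/setP => W; rewrite mem_IMG !inE card_pim mem_pim invgK. Qed.

Lemma IMG_comm (t : {perm 'I_m}) : IMG t comm = comm.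
Proof. by apply/setP => W; rewrite mem_IMG !inE card_pim. Qed.

Lemma shapeX (X : {set {set 'I_m}}) x Win Wout :
  Win \in comm -> x \in Win -> Wout \in comm -> x \notin Wout ->
  X \subset comm ->
  (forall t : {perm 'I_m}, t x = x -> IMG t X = X) ->
  X = [set W in comm | if x \in W then Win \in X else Wout \in X].
Proof.
move=> Winc xin Woutc xout Xs h.
have cW W : W \in comm -> #|W| = k by rewrite inE => /eqP.
apply/setP => W; rewrite inE; apply/idP/idP => [WX|/andP[Wc]].
  have Wc := subsetP Xs _ WX; rewrite Wc /=.
  case: ifP => xW.
    by apply: (sym_x WX Winc (cW _ Wc) _ h); rewrite xW xin.
  by apply: (sym_x WX Woutc (cW _ Wc) _ h); rewrite xW (negPf xout).
case: ifP => xW h1.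
  by apply: (sym_x h1 Wc (cW _ Winc) _ h); rewrite xW xin.
by apply: (sym_x h1 Wc (cW _ Woutc) _ h); rewrite xW (negPf xout).
Qed.

Theorem main_sec : nontrivial k f ->
  exists r, [/\ 1 <= r <= m - 1,
    (forall (x : 'I_m) (A : profile m), valid_profile A -> is_Axr x r A ->
       f A = [set W in committees m k | x \in W]) &
    (forall (x : 'I_m) (A : profile m), valid_profile A -> is_Anxr x r A ->
       f A = [set W in committees m k | x \notin W])].
Proof.
move=> [P [vP Pnt]].
have hk1 : 1 <= k <= m by move: Hk; lia.
have [Win [cWin xWin]] := exists_with x0 hk1.
have [Wout [cWout xWout]] := exists_without x0 (proj2 (andP Hk)).
have Winc : Win \in comm by rewrite inE cWin.
have Woutc : Wout \in comm by rewrite inE cWout.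
have ea r : 1 <= r <= m - 1 ->
    a x0 r = [set W in comm | if x0 \in W then Win \in a x0 r else Wout \in a x0 r].
  move=> h; have hA : 1 <= r <= m by move: h; lia.
  apply: shapeX => //.
    by apply: f_sub; apply: prof_valid; rewrite ?LA_ne ?LA_allne //; case/andP: h.
  by move=> t tx; rewrite -a_perm // tx.
have eb r : 1 <= r <= m - 1 ->
    b x0 r = [set W in comm | if x0 \in W then Win \in b x0 r else Wout \in b x0 r].
  move=> h; apply: shapeX => //.
    by apply: f_sub; apply: prof_valid; rewrite ?LN_ne ?LN_allne //; case/andP: h.
  by move=> t tx; rewrite -b_perm // tx.
have transfer r : 1 <= r <= m - 1 -> a x0 r = In x0 -> b x0 r = Out x0 ->
   exists r, [/\ 1 <= r <= m - 1,
    (forall (x : 'I_m) (A : profile m), valid_profile A -> is_Axr x r A ->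
       f A = [set W in committees m k | x \in W]) &
    (forall (x : 'I_m) (A : profile m), valid_profile A -> is_Anxr x r A ->
       f A = [set W in committees m k | x \notin W])].
  move=> h ha hb; have hA : 1 <= r <= m by move: h; lia.
  exists r; split => // x A vA [u mA].
    have -> : f A = a x r.
      apply: canon => //; first exact: enum_uniq.
      by move=> S; rewrite mA mem_LA; split => [[-> ->]|/andP[/eqP -> ->]]; rewrite ?eqxx.
    by rewrite -(tpermL x0 x) a_perm // ha IMG_In.
  have -> : f A = b x r.
    apply: canon => //; first exact: enum_uniq.
    by move=> S; rewrite mA mem_LN; split => [[-> ->]|/andP[/eqP -> ->]]; rewrite ?eqxx.
  by rewrite -(tpermL x0 x) b_perm // hb IMG_Out.
case: (boolP [exists r : 'I_m, [&& 0 < (r : nat), a x0 r == In x0 & b x0 r == Out x0]]).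
  move=> /existsP [r /and3P[r0 /eqP ha /eqP hb]].
  by apply: (transfer r) => //; rewrite r0 /=; have := ltn_ord r; lia.
move=> /existsPn ng.
have NBa r : 1 <= r <= m - 1 -> Wout \in b x0 r -> a x0 r = comm.
  move=> h qout.
  have hr : r < m by move: h; lia.
  have hA : 1 <= r <= m by move: h; lia.
  have r0 : 0 < r by case/andP: h.
  have ngr := ng (Ordinal hr); rewrite /= (_ : 0 < r) ?andTb in ngr; last by case/andP: h.
  have ea' := ea r h; have eb' := eb r h.
  have ne : (Win \in a x0 r) || (Wout \in a x0 r).
    apply/negPn/negP => /norP[/negbTE p1 /negbTE p2].
    have : a x0 r != set0.
      by apply: f_ne; apply: prof_valid => //; [exact: LA_ne|exact: LA_allne].
    by rewrite ea'; case/set0Pn => W; rewrite inE p1 p2; case: ifP; rewrite andbF.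
  have C1 : ((Win \in a x0 r) && (Win \in b x0 r)) || ((Wout \in a x0 r) && (Wout \in b x0 r)) ->
      (Win \in a x0 r) && (Wout \in a x0 r).
    move=> hh; have hc := a_cap_b h.
    have e : a x0 r :&: b x0 r = comm.
      apply: hc; apply/set0Pn; case/orP: hh => /andP[p q].
        by exists Win; rewrite inE p q.
      by exists Wout; rewrite inE p q.
    have : Win \in a x0 r :&: b x0 r by rewrite e.
    have : Wout \in a x0 r :&: b x0 r by rewrite e.
    by rewrite !inE => /andP[-> _] /andP[-> _].
  have po : Wout \in a x0 r.
    apply/negPn/negP => po.
    have pi : Win \in a x0 r by move: ne; rewrite (negPf po) orbF.
    have qi : Win \notin b x0 r.
      by apply/negP => qi; have := C1; rewrite pi qi /= => /(_ isT) h1; move: po; rewrite h1.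
    move/negP: ngr; apply; apply/andP; split.
      apply/eqP; rewrite ea'; apply/setP => W; rewrite /In !inE.
      by case: (x0 \in W); rewrite ?pi ?(negPf po) ?andbT ?andbF.
    apply/eqP; rewrite eb'; apply/setP => W; rewrite /Out !inE.
    by case: (x0 \in W); rewrite ?(negPf qi) ?qout ?andbT ?andbF.
  have pi : Win \in a x0 r.
    by have := C1; rewrite po qout orbT => /(_ isT) /andP[].
  rewrite ea'; apply/setP => W; rewrite inE pi po.
  by case: (W \in comm) => //=; case: ifP.
have NBall : forall d, d <= m - 2 -> Wout \in b x0 (m - 1 - d).
  elim=> [|d IHd] hd; first by rewrite subn0; apply: top.
  have h : 1 <= m - 1 - d <= m - 1 by move: hd Hm; lia.
  have aC := NBa _ h (IHd (ltnW hd)).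
  have h2 : 2 <= m - 1 - d <= m by move: hd Hm; lia.
  have := chain h2 (_ : Wout \in a x0 (m - 1 - d)) xWout.
  rewrite (_ : (m - 1 - d).-1 = m - 1 - d.+1); last by move: hd Hm; lia.
  by apply; rewrite aC.
have Aall : forall x r, 1 <= r <= m - 1 -> a x r = comm.
  move=> x r h.
  have e : r = m - 1 - (m - 1 - r) by move: h; lia.
  have aC : a x0 r = comm.
    apply: NBa => //; rewrite e; apply: NBall; move: h; lia.
  have hA : 1 <= r <= m by move: h; lia.
  by rewrite -(tpermL x0 x) a_perm // aC IMG_comm.
have FC := allF Aall.
case: Pnt; apply: Inter => //; first by apply/set0Pn; exists Win.
move=> W; split.
  by move=> Wc i S E; rewrite FC //; case: vP => _ [_]; apply; exact: E.
case: (vP) => [[i iP] [_ Pne]] h.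
move: iP; rewrite -fndSome; case E: (P.[? i])%fmap => [S|] // _.
by rewrite -(FC S (Pne i S E)); apply: h E.
Qed.

End Main.

End Aux.

Theorem mainTheorem14 (m k : nat) (f : profile m -> {set {set 'I_m}}) :
  2 <= m -> 1 <= k <= m - 1 ->
  is_ABC_rule k f -> nontrivial k f ->
  anonymous f -> neutral f -> consistent f -> continuous f -> indep_losers f ->
  exists r, [/\ 1 <= r <= m - 1,
    (forall (x : 'I_m) (A : profile m), valid_profile A -> is_Axr x r A ->
       f A = [set W in committees m k | x \in W]) &
    (forall (x : 'I_m) (A : profile m), valid_profile A -> is_Anxr x r A ->
       f A = [set W in committees m k | x \notin W])].
Proof.
move=> Hm Hk Habc Hnt Hanon Hneu Hcons _ Hil.
exact: (Aux.main_sec Hm Hk Habc Hanon Hneu Hcons Hil Hnt).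
Qed.
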